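(* Let $\eta>0$, $\beta\in\mathbb{R}$, and let $\widehat{\mathcal{L}}_1,\widehat{\mathcal{L}}_2\in\mathbb{R}^{N\times N}$ satisfy $\langle \widehat{\mathcal{L}}_i\mathbf{x},\mathbf{x}\rangle\le 0$ for all $\mathbf{x}\in\mathbb{R}^N$ ($i=1,2$) and $\langle \widehat{\mathcal{L}}_1\mathbf{w},\widehat{\mathcal{L}}_2\mathbf{w}\rangle\ge 0$ for all $\mathbf{w}\in\mathbb{R}^N$. With $\gamma_*:=\frac{\eta^2+\beta^2}{\eta}$ and $$\mathcal{P}_{\gamma_*}:=\left[\eta I-\widehat{\mathcal{L}}_2+\beta^2(\eta I-\widehat{\mathcal{L}}_1)^{-1}\right](\gamma_* I-\widehat{\mathcal{L}}_2)^{-1},$$ the smallest singular value satisfies $$s_{\min}(\mathcal{P}_{\gamma_*})=\min_{\mathbf{v}\neq\mathbf{0}}\frac{\|\mathcal{P}_{\gamma_*}\mathbf{v}\|}{\|\mathbf{v}\|}\ \ge\ \frac{\eta^2}{\eta^2+\beta^2}.$$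
   Context: $\langle\cdot,\cdot\rangle$ and $\|\cdot\|$ denote the Euclidean inner product and norm on $\mathbb{R}^N$. *)

(* Defs.v *)
From mathcomp Require Import all_boot all_order all_algebra.
Set Implicit Arguments. Unset Strict Implicit. Unset Printing Implicit Defensive.
Import Order.TTheory GRing.Theory Num.Theory.
Local Open Scope ring_scope.

Definition dotv (R : rcfType) (N : nat) (x y : 'cV[R]_N) : R :=
  \sum_(i < N) x i 0 * y i 0.

Definition normv (R : rcfType) (N : nat) (x : 'cV[R]_N) : R :=
  Num.sqrt (dotv x x).

Definition Pgamma (R : rcfType) (N : nat) (eta beta : R) (L1 L2 : 'M[R]_N) : 'M[R]_N :=
  let gam := (eta ^+ 2 + beta ^+ 2) / eta in
  (eta%:M - L2 + beta ^+ 2 *: invmx (eta%:M - L1)) *m invmx (gam%:M - L2).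

(* Main.v *)
Require Import Defs.
From mathcomp Require Import all_boot all_order all_algebra.
From mathcomp Require Import ring lra.
Import Order.TTheory GRing.Theory Num.Theory.
Local Open Scope ring_scope.

Lemma dotvC {R : rcfType} {N : nat} (x y : 'cV[R]_N) : dotv x y = dotv y x.
Proof. by rewrite /dotv; apply: eq_bigr => i _; rewrite mulrC. Qed.

Lemma dotvDl {R : rcfType} {N : nat} (x y z : 'cV[R]_N) :
  dotv (x + y) z = dotv x z + dotv y z.
Proof. by rewrite /dotv -big_split; apply: eq_bigr => i _; rewrite mxE mulrDl. Qed.

Lemma dotvZl {R : rcfType} {N : nat} (a : R) (x y : 'cV[R]_N) :
  dotv (a *: x) y = a * dotv x y.
Proof. by rewrite /dotv mulr_sumr; apply: eq_bigr => i _; rewrite mxE mulrA. Qed.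

Lemma dotvNl {R : rcfType} {N : nat} (x y : 'cV[R]_N) :
  dotv (- x) y = - dotv x y.
Proof. by rewrite -scaleN1r dotvZl mulN1r. Qed.

Lemma dotvBl {R : rcfType} {N : nat} (x y z : 'cV[R]_N) :
  dotv (x - y) z = dotv x z - dotv y z.
Proof. by rewrite dotvDl dotvNl. Qed.

Lemma dotvDr {R : rcfType} {N : nat} (x y z : 'cV[R]_N) :
  dotv z (x + y) = dotv z x + dotv z y.
Proof. by rewrite dotvC dotvDl !(dotvC z). Qed.

Lemma dotvZr {R : rcfType} {N : nat} (a : R) (x y : 'cV[R]_N) :
  dotv y (a *: x) = a * dotv y x.
Proof. by rewrite dotvC dotvZl dotvC. Qed.

Lemma dotvBr {R : rcfType} {N : nat} (x y z : 'cV[R]_N) :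
  dotv z (x - y) = dotv z x - dotv z y.
Proof. by rewrite dotvC dotvBl !(dotvC z). Qed.

Lemma dotv0l {R : rcfType} {N : nat} (x : 'cV[R]_N) : dotv 0 x = 0.
Proof. by rewrite -(scale0r 0) dotvZl mul0r. Qed.

Lemma dotv_ge0 {R : rcfType} {N : nat} (x : 'cV[R]_N) : 0 <= dotv x x.
Proof. by apply: sumr_ge0 => i _; have := sqr_ge0 (x i 0); rewrite expr2. Qed.

Lemma dotv_eq0 {R : rcfType} {N : nat} (x : 'cV[R]_N) : dotv x x = 0 -> x = 0.
Proof.
move=> H; apply/matrixP => i j; rewrite (ord1 j) mxE.
have P0 : forall i : 'I_N, true -> 0 <= x i 0 * x i 0.
  by move=> k _; have := sqr_ge0 (x k 0); rewrite expr2.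
have := psumr_eq0P P0 H (i := i) isT.
by move/eqP; rewrite -expr2 sqrf_eq0 => /eqP.
Qed.

Lemma dotv_CS {R : rcfType} {N : nat} (x y : 'cV[R]_N) :
  dotv x y ^+ 2 <= dotv x x * dotv y y.
Proof.
set a := dotv x x; set b := dotv y y; set c := dotv x y.
have hb := dotv_ge0 y; have ha := dotv_ge0 x.
have E : dotv (b *: x - c *: y) (b *: x - c *: y) = b * (a * b - c ^+ 2).
  rewrite !(dotvBl, dotvBr, dotvZl, dotvZr) (dotvC y x) -/a -/b -/c; ring.
have := dotv_ge0 (b *: x - c *: y); rewrite E.
have [b0|bpos] := eqVneq b 0.
  move=> _; have y0 : y = 0 by apply: dotv_eq0.
  by rewrite /c y0 dotvC dotv0l expr0n /= b0 mulr0.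
have bp : 0 < b by rewrite lt_def bpos hb.
by rewrite pmulr_rge0 // subr_ge0 mulrC.
Qed.

Lemma normv_ge0 {R : rcfType} {N : nat} (x : 'cV[R]_N) : 0 <= normv x.
Proof. exact: sqrtr_ge0. Qed.

Lemma normv_sqr {R : rcfType} {N : nat} (x : 'cV[R]_N) : normv x ^+ 2 = dotv x x.
Proof. by rewrite sqr_sqrtr // dotv_ge0. Qed.

Lemma dotv_le_norm {R : rcfType} {N : nat} (x y : 'cV[R]_N) :
  dotv x y <= normv x * normv y.
Proof.
have := dotv_CS x y; rewrite -!normv_sqr.
have := normv_ge0 x; have := normv_ge0 y.
set c := dotv x y; set p := normv x; set q := normv y => hq hp h.
have hpq : 0 <= p * q by apply: mulr_ge0.
nra.
Qed.

Lemma normv_triangle {R : rcfType} {N : nat} (x y : 'cV[R]_N) :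
  normv (x + y) <= normv x + normv y.
Proof.
have h1 := normv_sqr (x + y); rewrite dotvDl !dotvDr (dotvC y x) in h1.
have := dotv_le_norm x y; rewrite -!normv_sqr in h1.
have := normv_ge0 x; have := normv_ge0 y; have := normv_ge0 (x + y).
set c := dotv x y; set p := normv x; set q := normv y; set r := normv (x + y).
move=> hr hq hp hc.
have h2 : r ^+ 2 <= (p + q) ^+ 2.
  rewrite h1 -/c -/p -/q; nra.
have hpq : 0 <= p + q by lra.
nra.
Qed.

Lemma normvZ {R : rcfType} {N : nat} (k : R) (x : 'cV[R]_N) :
  normv (k *: x) = `|k| * normv x.
Proof.
by rewrite /normv dotvZl dotvZr mulrA -expr2 sqrtrM ?sqr_ge0 // sqrtr_sqr.
Qed.

Lemma normv_gt0 {R : rcfType} {N : nat} (x : 'cV[R]_N) : x != 0 -> 0 < normv x.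
Proof.
move=> hx; rewrite lt_def normv_ge0 andbT; apply/eqP => h.
by move/eqP: hx; apply; apply: dotv_eq0; rewrite -normv_sqr h expr0n.
Qed.

Lemma coercive_unit {R : rcfType} {N : nat} (M : 'M[R]_N) (c : R) :
  0 < c -> (forall x : 'cV[R]_N, c * dotv x x <= dotv (M *m x) x) ->
  M \in unitmx.
Proof.
move=> c0 H.
rewrite -unitmx_tr -row_free_unit -kermx_eq0; apply/eqP/row_matrixP => i.
rewrite row0; set u := row i (kermx M^T).
have hu : u *m M^T = 0 by apply/sub_kermxP; exact: row_sub.
have hx : M *m u^T = 0 by rewrite -[M]trmxK -trmx_mul hu trmx0.
have := H u^T; rewrite hx dotv0l => h.
have h0 : dotv u^T u^T = 0.
  apply/eqP; rewrite eq_le dotv_ge0 andbT.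
  by rewrite -(pmulr_rle0 _ c0).
by rewrite -[u]trmxK (dotv_eq0 _ h0) trmx0.
Qed.

Lemma expand_sub {R : rcfType} {N : nat} (k : R) (L : 'M[R]_N) (x : 'cV[R]_N) :
  (k%:M - L) *m x = k *: x - L *m x.
Proof. by rewrite mulmxBl mul_scalar_mx. Qed.

Theorem mainTheorem4 (R : rcfType) (N : nat) (eta beta : R)
  (L1 L2 : 'M[R]_N) :
  0 < eta ->
  (forall x : 'cV[R]_N, dotv (L1 *m x) x <= 0) ->
  (forall x : 'cV[R]_N, dotv (L2 *m x) x <= 0) ->
  (forall w : 'cV[R]_N, 0 <= dotv (L1 *m w) (L2 *m w)) ->
  forall v : 'cV[R]_N, v != 0 ->
    eta ^+ 2 / (eta ^+ 2 + beta ^+ 2) <= normv (Pgamma eta beta L1 L2 *m v) / normv v.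
Proof.
move=> he H1 H2 _ v v0.
rewrite /Pgamma /=.
set gam := (eta ^+ 2 + beta ^+ 2) / eta.
have eta0 : eta != 0 by rewrite gt_eqF.
have hgam : gam = eta + beta ^+ 2 / eta by rewrite /gam; field.
have gam0 : 0 < gam.
  by rewrite /gam divr_gt0 // ltr_wpDr ?sqr_ge0 // exprn_gt0.
set A := eta%:M - L1; set B := gam%:M - L2.
have uA : A \in unitmx.
  apply: (@coercive_unit R N A eta he) => x; rewrite expand_sub dotvBl dotvZl.
  by have := H1 x; lra.
have uB : B \in unitmx.
  apply: (@coercive_unit R N B gam gam0) => x; rewrite expand_sub dotvBl dotvZl.
  by have := H2 x; lra.
set y := invmx B *m v.
set t := invmx A *m y.
have hy : y = A *m t by rewrite /t mulmxA mulmxV // mul1mx.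
have hv : v = B *m y by rewrite /y mulmxA mulmxV // mul1mx.
set z := _ *m v.
have hz : z = eta *: y - L2 *m y + beta ^+ 2 *: t.
  by rewrite /z -mulmxA -/y mulmxDl expand_sub -scalemxAl.
have hy' : y = eta *: t - L1 *m t by rewrite hy expand_sub.
have hv' : v = z + (- (beta ^+ 2 / eta)) *: (L1 *m t).
  rewrite hv expand_sub hz hy'.
  move: (L2 *m (eta *: t - L1 *m t)) (L1 *m t) (t : 'cV[R]_N) => b a t'.
  apply/matrixP => i j; rewrite !mxE hgam; field; exact: eta0.
have ha : normv (L1 *m t) <= normv y.
  rewrite /normv ler_sqrt ?dotv_ge0 // hy'.
  rewrite !(dotvBl, dotvBr, dotvZl, dotvZr) (dotvC t (L1 *m t)).
  have := H1 t; have := dotv_ge0 t; nra.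
have hb : eta * normv y <= normv z.
  have e1 : eta * dotv y y <= dotv z y.
    rewrite hz !(dotvDl, dotvBl, dotvZl).
    have : 0 <= dotv t y.
      rewrite hy' dotvBr dotvZr (dotvC t (L1 *m t)); have := H1 t; have := dotv_ge0 t; nra.
    rewrite dotvNl; have := H2 y; have := sqr_ge0 beta; nra.
  have e2 := dotv_le_norm z y.
  rewrite -normv_sqr in e1.
  have := normv_ge0 y; have := normv_ge0 z.
  move: e1 e2; set p := normv y; set q := normv z; set d := dotv z y => e1 e2 hq hp.
  have [p0|pp] := eqVneq p 0; first by rewrite p0 mulr0.
  have ppos : 0 < p by rewrite lt_def pp hp.
  nra.
have hc : normv v <= normv z + beta ^+ 2 / eta * normv y.
  rewrite {1}hv'; apply: (le_trans (normv_triangle _ _)).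
  have bge : 0 <= beta ^+ 2 / eta by rewrite divr_ge0 ?sqr_ge0 // ltW.
  rewrite normvZ normrN ger0_norm //.
  by rewrite lerD2l ler_wpM2l.
have nv := normv_gt0 _ v0.
have hs : 0 < eta ^+ 2 + beta ^+ 2 by rewrite ltr_wpDr ?sqr_ge0 // exprn_gt0.
have key : eta ^+ 2 * normv v <= normv z * (eta ^+ 2 + beta ^+ 2).
  have hbb : 0 <= beta ^+ 2 by rewrite sqr_ge0.
  have e3 : eta ^+ 2 * normv v <= eta ^+ 2 * normv z + beta ^+ 2 * (eta * normv y).
    have : eta ^+ 2 * normv v <= eta ^+ 2 * (normv z + beta ^+ 2 / eta * normv y).
      by rewrite ler_wpM2l // sqr_ge0.
    have -> : eta ^+ 2 * (normv z + beta ^+ 2 / eta * normv y)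
      = eta ^+ 2 * normv z + beta ^+ 2 * (eta * normv y) by field.
    by [].
  have : beta ^+ 2 * (eta * normv y) <= beta ^+ 2 * normv z by rewrite ler_wpM2l.
  lra.
rewrite ler_pdivrMr // mulrC mulrA ler_pdivlMr //.
by rewrite mulrC.
Qed.
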